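(* Let $\gamma:[0,1]\to\mathbb{R}^2$ be a $C^1$ curve with constant speed $c>0$ with $\gamma(0)=(0,0)$ and $\gamma'(0)=(c,0)$, and let $\theta$ be a turning angle function for $\gamma$ with $\theta(0)\in 2\pi\mathbb{Z}$. If $|\theta(1)-\theta(0)|\ge 2\pi$ and \[\|\gamma(1)\|\ge\sqrt{2\big(1-\cos\theta(1)\big)}\,\max_{s\in[0,1]}\|\gamma(s)\|,\] then there exist cuts $0\le c_1\le c_2\le 1$ such that $r_{(c_1,c_2)}(0)=r_{(c_1,c_2)}(1)$ (the rearranged curve is closed, not necessarily smooth at the end point).
   Context: A turning angle function for $\gamma$ is a continuous function $\theta$ with $\gamma'(s)=c(\cos\theta(s),\sin\theta(s))$. Concatenation: if $\alpha$ on $[a_1,b_1]$ and $\beta$ on $[a_2,b_2]$ are $C^1$ planar curves with the same constant speed, $\alpha*\beta$ is the curve on $[0,(b_1-a_1)+(b_2-a_2)]$ that equals $\alpha(s+a_1)$ for $s\le b_1-a_1$ and equals $T(\beta(s-(b_1-a_1)+a_2))$ afterwards, where $T$ is the orientation-preserving rigid motion of $\mathbb{R}^2$ sending $\beta(a_2)$ to $\alpha(b_1)$ and the unit tangent $\beta'(a_2)/c$ to $\alpha'(b_1)/c$. For cuts $0\le c_1\le c_2\le 1$, let $\gamma_1,\gamma_2,\gamma_3$ be the restrictions of $\gamma$ to $[0,c_1]$, $[c_1,c_2]$, $[c_2,1]$ (an arc of length zero is a point carrying the tangent direction of $\gamma$ there). The rearranged curve is $r_{(c_1,c_2)}:=\gamma_1*\gamma_3*\gamma_2:[0,1]\to\mathbb{R}^2$.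 Throughout this setting the paper normalizes $\gamma(0)=(0,0)$ and the initial tangent along the positive $x$-axis. *)

(* Defs.v *)
From Stdlib Require Import Reals Lra ZArith.
Open Scope R_scope.

Definition vec := (R * R)%type.

Definition vnorm (p : vec) : R := sqrt (fst p * fst p + snd p * snd p).

Definition vadd (p q : vec) : vec := (fst p + fst q, snd p + snd q).
Definition vsub (p q : vec) : vec := (fst p - fst q, snd p - snd q).
Definition vscale (k : R) (p : vec) : vec := (k * fst p, k * snd p).

Definition inI (a b s : R) : Prop := a <= s <= b.

Definition cont_on (a b : R) (f : R -> R) : Prop :=
  forall s, inI a b s -> forall eps, 0 < eps -> exists delta, 0 < delta /\
    forall t, inI a b t -> Rabs (t - s) < delta -> Rabs (f t - f s) < eps.

Definition deriv_on (a b : R) (f df : R -> R) : Prop :=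
  forall s, inI a b s -> forall eps, 0 < eps -> exists delta, 0 < delta /\
    forall t, inI a b t -> 0 < Rabs (t - s) < delta ->
      Rabs ((f t - f s) / (t - s) - df s) < eps.

Definition C1_curve_on (a b : R) (g dg : R -> vec) : Prop :=
  deriv_on a b (fun s => fst (g s)) (fun s => fst (dg s)) /\
  deriv_on a b (fun s => snd (g s)) (fun s => snd (dg s)) /\
  cont_on a b (fun s => fst (dg s)) /\ cont_on a b (fun s => snd (dg s)).

Definition turning_angle (a b c : R) (dg : R -> vec) (theta : R -> R) : Prop :=
  cont_on a b theta /\
  forall s, inI a b s -> dg s = (c * cos (theta s), c * sin (theta s)).

(* A parametrized arc: position, tangent (derivative), parameter interval. *)
Record arc := mkArc { apos : R -> vec; atan_ : R -> vec; lo : R; hi : R }.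

(* rotation by the angle sending unit vector u to unit vector v *)
Definition rot (u v : vec) (x : vec) : vec :=
  let cs := fst u * fst v + snd u * snd v in
  let sn := fst u * snd v - snd u * fst v in
  (cs * fst x - sn * snd x, sn * fst x + cs * snd x).

(* concatenation alpha * beta for curves of common constant speed c:
   beta is moved by the orientation preserving rigid motion T sending
   beta(a2) to alpha(b1) and the unit tangent beta'(a2)/c to alpha'(b1)/c. *)
Definition concat (c : R) (al be : arc) : arc :=
  let L1 := hi al - lo al in
  let L2 := hi be - lo be in
  let u := vscale (/ c) (atan_ be (lo be)) in
  let v := vscale (/ c) (atan_ al (hi al)) in
  let T := fun p => vadd (apos al (hi al)) (rot u v (vsub p (apos be (lo be)))) in
  mkArc
    (fun s => if Rle_dec s L1 then apos al (s + lo al)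
              else T (apos be (s - L1 + lo be)))
    (fun s => if Rle_dec s L1 then atan_ al (s + lo al)
              else rot u v (atan_ be (s - L1 + lo be)))
    0 (L1 + L2).

(* restriction of gamma (with derivative dgamma) to [a,b]; when a = b this is
   a point carrying the tangent direction of gamma there *)
Definition restr (g dg : R -> vec) (a b : R) : arc := mkArc g dg a b.

Definition rearranged (c : R) (g dg : R -> vec) (c1 c2 : R) : arc :=
  concat c (concat c (restr g dg 0 c1) (restr g dg c2 1)) (restr g dg c1 c2).

(* Main.v *)
Require Import Defs.
From Stdlib Require Import Reals ZArith.
From Stdlib Require Import Reals Lra Lia ZArith Classical ClassicalEpsilon.
From Coquelicot Require Import Coquelicot.
Open Scope R_scope.

Definition polar (w : C) (al : R) : Prop := w = (Cmod w * cos al, Cmod w * sin al).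
Definition Aw (w : C) : R := atan (snd w / fst w).

Lemma Cmod_pair x y : Cmod (x, y) = sqrt (x * x + y * y).
Proof. unfold Cmod; simpl; f_equal; ring. Qed.

Lemma polar_A w : 0 < fst w -> polar w (Aw w).
Proof.
  destruct w as [x y]; simpl; intro Hx; unfold polar, Aw; simpl.
  rewrite cos_atan, sin_atan, Cmod_pair.
  set (r := y / x).
  assert (E : x * x + y * y = (x * x) * (1 + r²)).
  { unfold r, Rsqr; field; lra. }
  assert (0 <= 1 + r²) by (unfold Rsqr; nra).
  rewrite E, sqrt_mult; [|nra|lra].
  rewrite sqrt_square by lra.
  assert (Hs : 0 < sqrt (1 + r²)) by (apply sqrt_lt_R0; unfold Rsqr; nra).
  f_equal.
  - field. lra.
  - unfold r in *. field. split; lra.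
Qed.

Lemma polar_mult z w a b : polar z a -> polar w b -> polar (z * w)%C (a + b).
Proof.
  unfold polar; intros Hz Hw. rewrite Cmod_mult.
  destruct z as [zx zy], w as [wx wy].
  set (rz := Cmod (zx, zy)) in *; set (rw := Cmod (wx, wy)) in *.
  clearbody rz rw. injection Hz; injection Hw; intros; subst.
  unfold Cmult; simpl. rewrite cos_plus, sin_plus. f_equal; ring.
Qed.

Lemma polar_conj z a : polar z a -> polar (Cconj z) (- a).
Proof.
  unfold polar; intros Hz. rewrite Cmod_conj.
  destruct z as [zx zy]. set (rz := Cmod (zx, zy)) in *. clearbody rz.
  injection Hz; intros; subst. unfold Cconj; simpl. rewrite cos_neg, sin_neg. f_equal; ring.
Qed.

Lemma polar_scale r z a : 0 < r -> polar (r * z)%C a -> polar z a.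
Proof.
  unfold polar; intros Hr Hz. rewrite Cmod_mult in Hz.
  assert (Cmod (RtoC r) = r) by (unfold Cmod; simpl; rewrite Rmult_0_l, Rplus_0_r, Rmult_1_r; apply sqrt_square; lra).
  rewrite H in Hz.
  destruct z as [zx zy]. set (rz := Cmod (zx, zy)) in *. clearbody rz.
  unfold Cmult in Hz; simpl in Hz. injection Hz; intros E1 E2.
  f_equal.
  - apply (Rmult_eq_reg_l r); [|lra]. replace (r * zx) with (r * zx - 0 * zy) by ring. rewrite E2. ring.
  - apply (Rmult_eq_reg_l r); [|lra]. replace (r * zy) with (r * zy + 0 * zx) by ring. rewrite E1. ring.
Qed.

Lemma polar_real r : 0 <= r -> polar (r, 0) 0.
Proof.
  intros Hr; unfold polar. rewrite Cmod_pair, cos_0, sin_0.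
  replace (r * r + 0 * 0) with (r * r) by ring. rewrite sqrt_square by lra. f_equal; ring.
Qed.

Lemma polar_unique w a b : polar w a -> polar w b -> w <> 0%C -> cos (a - b) = 1.
Proof.
  unfold polar; intros Ha Hb Hw.
  assert (Hm : 0 < Cmod w) by (apply Cmod_gt_0; auto).
  assert (Hm2 : Cmod w ^ 2 = fst w ^ 2 + snd w ^ 2) by (rewrite Cmod2_alt; reflexivity).
  set (m := Cmod w) in *. clearbody m.
  destruct w as [x y]. injection Ha; injection Hb; intros; simpl in Hm2.
  rewrite cos_minus.
  apply (Rmult_eq_reg_l (m * m)); [|nra].
  assert (Hsa := sin2_cos2 a). assert (Hsb := sin2_cos2 b). unfold Rsqr in *.
  nra.
Qed.

Lemma cos_eq_1_small x : cos x = 1 -> - (2 * PI) < x < 2 * PI -> x = 0.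
Proof.
  intros Hc Hx.
  assert (Hs : sin x = 0).
  { assert (H := sin2_cos2 x). rewrite Hc in H. unfold Rsqr in H. nra. }
  destruct (sin_eq_0_0 x Hs) as [k Hk].
  assert (HPI := PI_RGT_0).
  assert (-2 < IZR k < 2).
  { subst; split; nra. }
  assert (k = -1 \/ k = 0 \/ k = 1)%Z.
  { destruct H as [H1 H2]. apply lt_IZR in H1. apply lt_IZR in H2. lia. }
  destruct H0 as [ -> | [ -> | -> ] ]; subst.
  - replace (IZR (-1) * PI) with (- PI) in Hc by (simpl; ring). rewrite cos_neg, cos_PI in Hc; lra.
  - ring.
  - rewrite Rmult_1_l, cos_PI in Hc; lra.
Qed.
From Stdlib Require Import Reals Lra Lia ZArith Classical ClassicalEpsilon.
From Coquelicot Require Import Coquelicot.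
Open Scope R_scope.

Fixpoint Ssum (f : nat -> R) (n : nat) : R :=
  match n with O => 0 | S k => Ssum f k + f k end.

Lemma Cmod_sq z : Cmod z * Cmod z = fst z * fst z + snd z * snd z.
Proof. destruct z as [x y]; rewrite Cmod_pair; simpl; apply sqrt_sqrt; nra. Qed.

Lemma conj_self z : (z * Cconj z)%C = (Cmod z * Cmod z, 0).
Proof. rewrite Cmod_sq; destruct z as [x y]; unfold Cmult, Cconj; simpl; f_equal; ring. Qed.

Lemma RtoC_multC r z : (RtoC r * z)%C = (r * fst z, r * snd z).
Proof. destruct z; unfold Cmult, RtoC; simpl; f_equal; ring. Qed.

Lemma re_pos_step z z' m : m <= Cmod z -> Cmod (z' - z)%C < m -> 0 < fst (z' * Cconj z)%C.
Proof.
  intros H1 H2.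
  assert (H0 : 0 <= Cmod (z' - z)%C) by apply Cmod_ge_0.
  assert (H3 := re_le_Cmod ((z' - z) * Cconj z)%C).
  rewrite Cmod_mult, Cmod_conj in H3.
  assert (H4 := Cmod_sq z).
  assert (E : fst (z' * Cconj z)%C = fst ((z' - z) * Cconj z)%C + (fst z * fst z + snd z * snd z)).
  { destruct z, z'; simpl; ring. }
  rewrite E, <- H4. unfold Re in H3.
  apply Rabs_le_between in H3. destruct H3. nra.
Qed.

Lemma Cnz_of_re (w : C) : 0 < fst w -> w <> 0%C.
Proof. intros H E; subst; simpl in H; lra. Qed.

Lemma Aw_bound (w : C) : - (PI / 2) < Aw w < PI / 2.
Proof. unfold Aw. destruct (atan_bound (snd w / fst w)). lra. Qed.

Lemma A_diff u z z' :
  0 < fst (z * Cconj u)%C -> 0 < fst (z' * Cconj u)%C -> 0 < fst (z' * Cconj z)%C ->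
  Aw (z' * Cconj z)%C = Aw (z' * Cconj u)%C - Aw (z * Cconj u)%C.
Proof.
  intros H1 H2 H3.
  assert (Pz := polar_A _ H1). assert (Pz' := polar_A _ H2).
  assert (P := polar_mult _ _ _ _ Pz' (polar_conj _ _ Pz)).
  assert (Hu : u <> 0%C).
  { intro E; subst. destruct z; unfold Cmult, Cconj in H1; simpl in H1; lra. }
  assert (Hm : 0 < Cmod u) by (apply Cmod_gt_0; auto).
  assert (E : ((z' * Cconj u) * Cconj (z * Cconj u))%C = (RtoC (Cmod u * Cmod u) * (z' * Cconj z))%C).
  { rewrite RtoC_multC, Cmod_sq. destruct u, z, z'; unfold Cmult, Cconj; simpl; f_equal; ring. }
  rewrite E in P. apply polar_scale in P; [|nra].
  assert (Q := polar_A _ H3).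
  assert (C1 := polar_unique _ _ _ Q P (Cnz_of_re _ H3)).
  apply cos_eq_1_small in C1.
  - lra.
  - assert (B1 := Aw_bound (z' * Cconj z)%C). assert (B2 := Aw_bound (z' * Cconj u)%C).
    assert (B3 := Aw_bound (z * Cconj u)%C). assert (HP := PI_RGT_0). lra.
Qed.

Lemma tele (zf : nat -> C) n :
  (forall i, (i < n)%nat -> 0 < fst (zf (S i) * Cconj (zf i))%C) ->
  zf O <> 0%C ->
  polar (zf n * Cconj (zf O))%C (Ssum (fun i => Aw (zf (S i) * Cconj (zf i))%C) n).
Proof.
  intros Hst H0. induction n as [|n IH].
  - simpl. rewrite conj_self. apply polar_real. assert (H := Cmod_ge_0 (zf O)). nra.
  - simpl. assert (IH' : polar (zf n * Cconj (zf O))%C (Ssum (fun i => Aw (zf (S i) * Cconj (zf i))%C) n)).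
    { apply IH; intros; apply Hst; lia. }
    assert (HY : 0 < fst (zf (S n) * Cconj (zf n))%C) by (apply Hst; lia).
    assert (PY := polar_A _ HY).
    assert (P := polar_mult _ _ _ _ IH' PY).
    assert (Hn : zf n <> 0%C).
    { intro E. rewrite E in HY. destruct (zf (S n)); unfold Cmult, Cconj in HY; simpl in HY; lra. }
    assert (Hm : 0 < Cmod (zf n)) by (apply Cmod_gt_0; auto).
    assert (E : ((zf n * Cconj (zf O)) * (zf (S n) * Cconj (zf n)))%C
               = (RtoC (Cmod (zf n) * Cmod (zf n)) * (zf (S n) * Cconj (zf O)))%C).
    { rewrite RtoC_multC, Cmod_sq. destruct (zf n), (zf O), (zf (S n)); unfold Cmult, Cconj; simpl; f_equal; ring. }
    rewrite E in P. apply polar_scale in P; [exact P|nra].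
Qed.

Lemma tele_u u (zf : nat -> C) n :
  (forall i, (i <= n)%nat -> 0 < fst (zf i * Cconj u)%C) ->
  (forall i, (i < n)%nat -> 0 < fst (zf (S i) * Cconj (zf i))%C) ->
  Ssum (fun i => Aw (zf (S i) * Cconj (zf i))%C) n = Aw (zf n * Cconj u)%C - Aw (zf O * Cconj u)%C.
Proof.
  intros Hu Hst. induction n as [|n IH].
  - simpl; ring.
  - simpl. rewrite IH; [| intros; apply Hu; lia | intros; apply Hst; lia].
    rewrite (A_diff u (zf n) (zf (S n))) by (try apply Hu; try apply Hst; lia). ring.
Qed.
From Stdlib Require Import Reals Lra Lia ZArith Classical ClassicalEpsilon.
From Coquelicot Require Import Coquelicot.
Open Scope R_scope.

Definition cl (x : R) : R := Rmax 0 (Rmin 1 x).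
Lemma cl_lip x y : Rabs (cl x - cl y) <= Rabs (x - y).
Proof. unfold cl, Rmax, Rmin; repeat destruct Rle_dec; unfold Rabs; repeat destruct Rcase_abs; lra. Qed.
Lemma cl_in x : 0 <= cl x <= 1.
Proof. unfold cl, Rmax, Rmin; repeat destruct Rle_dec; lra. Qed.
Lemma cl_id x : 0 <= x <= 1 -> cl x = x.
Proof. unfold cl, Rmax, Rmin; repeat destruct Rle_dec; lra. Qed.

Lemma cpt_intro (f : R -> R) x :
  (forall eps, 0 < eps -> exists del, 0 < del /\ forall y, Rabs (y - x) < del -> Rabs (f y - f x) < eps) ->
  continuity_pt f x.
Proof.
  intros H. unfold continuity_pt, continue_in, limit1_in, limit_in. simpl. unfold R_dist.
  intros eps Heps. destruct (H eps Heps) as [d [Hd Hy]]. exists d; split; [lra|].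
  intros y [_ Hy']. apply Hy; auto.
Qed.

Lemma cpt_plus f g x : continuity_pt f x -> continuity_pt g x -> continuity_pt (fun y => f y + g y) x.
Proof. intros; apply (continuity_pt_plus f g); auto. Qed.
Lemma cpt_minus f g x : continuity_pt f x -> continuity_pt g x -> continuity_pt (fun y => f y - g y) x.
Proof. intros; apply (continuity_pt_minus f g); auto. Qed.
Lemma cpt_mult f g x : continuity_pt f x -> continuity_pt g x -> continuity_pt (fun y => f y * g y) x.
Proof. intros; apply (continuity_pt_mult f g); auto. Qed.
Lemma cpt_div f g x : continuity_pt f x -> continuity_pt g x -> g x <> 0 -> continuity_pt (fun y => f y / g y) x.
Proof. intros; apply (continuity_pt_div f g); auto. Qed.
Lemma cpt_atan f x : continuity_pt f x -> continuity_pt (fun y => atan (f y)) x.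
Proof. intros; apply (continuity_pt_comp f atan); auto. apply derivable_continuous_pt, derivable_pt_atan. Qed.
Lemma cpt_const c x : continuity_pt (fun _ => c) x.
Proof. apply continuity_pt_const. intros a b; reflexivity. Qed.

Lemma Cmod_rev x y : Rabs (Cmod x - Cmod y) <= Cmod (x - y)%C.
Proof.
  assert (H1 := Cmod_triangle (x - y)%C y). assert (H2 := Cmod_triangle (y - x)%C x).
  replace (x - y + y)%C with x in H1 by ring. replace (y - x + x)%C with y in H2 by ring.
  replace (y - x)%C with (- (x - y))%C in H2 by ring. rewrite Cmod_opp in H2.
  apply Rabs_le; lra.
Qed.

Lemma fst_le_Cmod (z : C) : Rabs (fst z) <= Cmod z.
Proof. apply re_le_Cmod. Qed.
Lemma snd_le_Cmod (z : C) : Rabs (snd z) <= Cmod z.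
Proof.
  destruct z as [x y]. rewrite Cmod_pair. simpl. rewrite <- sqrt_Rsqr_abs.
  apply sqrt_le_1_alt. unfold Rsqr; nra.
Qed.

Lemma Ssum_zero f n : (forall i, f i = 0) -> Ssum f n = 0.
Proof. intros H; induction n; simpl; [reflexivity| rewrite IHn, H; ring]. Qed.

Lemma cpt_Ssum (F : nat -> R -> R) n x : (forall i, (i < n)%nat -> continuity_pt (F i) x) ->
  continuity_pt (fun a => Ssum (fun i => F i a) n) x.
Proof.
  induction n; intros H; simpl.
  - apply cpt_const.
  - apply cpt_plus. apply IHn; intros; apply H; lia. apply H; lia.
Qed.

Lemma Aw_expand (z' z : C) : Aw (z' * Cconj z)%C = atan ((snd z' * fst z - fst z' * snd z) / (fst z' * fst z + snd z' * snd z)).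
Proof. unfold Aw; destruct z, z'; simpl; f_equal; f_equal; ring. Qed.

Section Core.
Variable P : R -> R -> C.
Variable Phi : R -> R.
Hypothesis HU : forall eps, 0 < eps -> exists del, 0 < del /\ forall a a' t t',
  Rabs (a - a') < del -> Rabs (t - t') < del -> Cmod (P a t - P a' t')%C < eps.
Hypothesis HNZ : forall a t, P a t <> 0%C.
Hypothesis HCL : forall a t, P a t = P (cl a) t.
Hypothesis HPhi : continuity Phi.
Hypothesis HPOL : forall a, 0 <= a <= 1 -> polar (P a 1 * Cconj (P a 0))%C (Phi a).
Hypothesis HONE : forall t, P 1 t = P 1 0.
Hypothesis HPhi1 : Phi 1 = 0.
Hypothesis HZERO : exists u, forall t, 0 <= t <= 1 -> 0 < fst (P 0 t * Cconj u)%C.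
Hypothesis HPhi0 : 2 * PI <= Rabs (Phi 0).

Lemma cont_t a t0 : continuity_pt (fun t => Cmod (P a t)) t0.
Proof.
  apply cpt_intro; intros eps Heps. destruct (HU eps Heps) as [d [Hd H]].
  exists d; split; auto. intros y Hy. eapply Rle_lt_trans; [apply Cmod_rev|].
  apply H; auto. rewrite Rminus_diag, Rabs_R0; auto.
Qed.

Lemma cont_fst t a0 : continuity_pt (fun a => fst (P a t)) a0.
Proof.
  apply cpt_intro; intros eps Heps. destruct (HU eps Heps) as [d [Hd H]].
  exists d; split; auto. intros y Hy. eapply Rle_lt_trans; [|apply (H y a0 t t); auto].
  - replace (fst (P y t) - fst (P a0 t)) with (fst (P y t - P a0 t)%C) by (simpl; ring). apply fst_le_Cmod.
  - rewrite Rminus_diag, Rabs_R0; auto.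
Qed.

Lemma cont_snd t a0 : continuity_pt (fun a => snd (P a t)) a0.
Proof.
  apply cpt_intro; intros eps Heps. destruct (HU eps Heps) as [d [Hd H]].
  exists d; split; auto. intros y Hy. eapply Rle_lt_trans; [|apply (H y a0 t t); auto].
  - replace (snd (P y t) - snd (P a0 t)) with (snd (P y t - P a0 t)%C) by (simpl; ring). apply snd_le_Cmod.
  - rewrite Rminus_diag, Rabs_R0; auto.
Qed.

Lemma min_exists a : exists t, (forall t', 0 <= t' <= 1 -> Cmod (P a t) <= Cmod (P a t')) /\ 0 <= t <= 1.
Proof.
  destruct (continuity_ab_min (fun t => Cmod (P a t)) 0 1) as [t [H1 H2]]; [lra| intros; apply cont_t|].
  exists t; split; auto.
Qed.

Definition tm (a : R) : R := proj1_sig (constructive_indefinite_description _ (min_exists a)).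
Lemma tm_spec a : (forall t', 0 <= t' <= 1 -> Cmod (P a (tm a)) <= Cmod (P a t')) /\ 0 <= tm a <= 1.
Proof. unfold tm; destruct constructive_indefinite_description; simpl; auto. Qed.
Definition h (a : R) : R := Cmod (P a (tm a)).

Lemma h_cont a0 : continuity_pt h a0.
Proof.
  apply cpt_intro; intros eps Heps. destruct (HU eps Heps) as [d [Hd H]].
  exists d; split; auto. intros y Hy. unfold h.
  destruct (tm_spec y) as [S1 I1]. destruct (tm_spec a0) as [S2 I2].
  assert (A1 := S1 (tm a0) I2). assert (A2 := S2 (tm y) I1).
  assert (B1 : Cmod (P y (tm a0) - P a0 (tm a0))%C < eps) by (apply H; auto; rewrite Rminus_diag, Rabs_R0; auto).
  assert (B2 : Cmod (P y (tm y) - P a0 (tm y))%C < eps) by (apply H; auto; rewrite Rminus_diag, Rabs_R0; auto).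
  assert (C1 := Cmod_rev (P y (tm a0)) (P a0 (tm a0))). assert (C2 := Cmod_rev (P y (tm y)) (P a0 (tm y))).
  apply Rabs_le_between in C1. apply Rabs_le_between in C2.
  apply Rabs_def1; lra.
Qed.

Lemma lower_bound : exists m, 0 < m /\ forall a t, 0 <= t <= 1 -> m <= Cmod (P a t).
Proof.
  destruct (continuity_ab_min h 0 1) as [am [H1 H2]]; [lra| intros; apply h_cont|].
  exists (h am); split.
  - unfold h. apply Cmod_gt_0. apply HNZ.
  - intros a t Ht. rewrite HCL. eapply Rle_trans; [apply (H1 (cl a) (cl_in a))|].
    apply (proj1 (tm_spec (cl a))); auto.
Qed.

Theorem core : False.
Proof.
  destruct lower_bound as [m [Hm Hlb]].
  destruct (HU m Hm) as [del [Hdel Hdl]].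
  destruct (archimed_cor1 del Hdel) as [N [HN HN0]].
  assert (HNr : 0 < INR N) by (apply lt_0_INR; auto).
  set (zf := fun a (i : nat) => P a (INR i / INR N)).
  assert (Hin : forall i, (i <= N)%nat -> 0 <= INR i / INR N <= 1).
  { intros i Hi. apply le_INR in Hi. split.
    - apply Rdiv_le_0_compat; [apply pos_INR|lra].
    - apply (Rmult_le_reg_r (INR N)); auto. unfold Rdiv; rewrite Rmult_assoc, Rinv_l; lra. }
  assert (Hstep : forall a i, (i < N)%nat -> 0 < fst (zf a (S i) * Cconj (zf a i))%C).
  { intros a i Hi. unfold zf. apply (re_pos_step _ _ m).
    - apply Hlb, Hin; lia.
    - apply Hdl. rewrite Rminus_diag, Rabs_R0; auto.
      rewrite S_INR. replace ((INR i + 1) / INR N - INR i / INR N) with (/ INR N) by (field; lra).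
      rewrite Rabs_pos_eq; [auto| left; apply Rinv_0_lt_compat; auto]. }
  set (D := fun a => Ssum (fun i => Aw (zf a (S i) * Cconj (zf a i))%C) N).
  assert (EN : INR N / INR N = 1) by (field; lra).
  assert (E0 : INR 0 / INR N = 0) by (simpl; unfold Rdiv; ring).
  assert (HcosD : forall a, 0 <= a <= 1 -> cos (D a - Phi a) = 1).
  { intros a Ha. assert (T := tele (zf a) N (Hstep a) (HNZ _ _)).
    unfold zf in T at 1 2. rewrite EN, E0 in T.
    apply (polar_unique _ _ _ T (HPOL a Ha)).
    intro E. assert (Cmod (P a 1 * Cconj (P a 0))%C = 0) by (rewrite E; apply Cmod_0).
    rewrite Cmod_mult, Cmod_conj in H.
    assert (0 < Cmod (P a 1)) by (apply Cmod_gt_0, HNZ). assert (0 < Cmod (P a 0)) by (apply Cmod_gt_0, HNZ).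
    nra. }
  assert (HDc : continuity D).
  { intro x. unfold D. apply (cpt_Ssum (fun i a => Aw (zf a (S i) * Cconj (zf a i))%C)).
    intros i Hi. assert (Hs := Hstep x i Hi).
    change (continuity_pt (fun a => Aw (zf a (S i) * Cconj (zf a i))%C) x).
    assert (E : forall a, Aw (zf a (S i) * Cconj (zf a i))%C =
      atan ((snd (zf a (S i)) * fst (zf a i) - fst (zf a (S i)) * snd (zf a i)) /
            (fst (zf a (S i)) * fst (zf a i) + snd (zf a (S i)) * snd (zf a i)))).
    { intros; apply Aw_expand. }
    apply (continuity_pt_ext _ _ x (fun a => eq_sym (E a))).
    unfold zf. apply cpt_atan. apply cpt_div.
    - apply cpt_minus; apply cpt_mult; first [apply cont_fst | apply cont_snd].
    - apply cpt_plus; apply cpt_mult; first [apply cont_fst | apply cont_snd].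
    - unfold zf in Hs. destruct (P x (INR (S i) / INR N)), (P x (INR i / INR N)). simpl in Hs |- *. lra. }
  assert (HD1 : D 1 = 0).
  { unfold D. apply Ssum_zero. intros i. unfold zf. rewrite (HONE (INR (S i) / INR N)), (HONE (INR i / INR N)).
    rewrite Aw_expand. replace (snd (P 1 0) * fst (P 1 0) - fst (P 1 0) * snd (P 1 0)) with 0 by ring.
    unfold Rdiv; rewrite Rmult_0_l; apply atan_0. }
  assert (HD0 : Rabs (D 0) < PI).
  { destruct HZERO as [u Hu]. unfold D.
    rewrite (tele_u u (zf 0)).
    - assert (B1 := Aw_bound (zf 0 N * Cconj u)%C). assert (B2 := Aw_bound (zf 0 O * Cconj u)%C).
      apply Rabs_def1; lra.
    - intros i Hi. apply Hu, Hin; auto.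
    - intros; apply Hstep; auto. }
  set (f := fun a => D a - Phi a).
  assert (Hfc : forall c, continuity (fun a => f a - c)).
  { intros c x. unfold f. apply cpt_minus; [apply cpt_minus; [apply HDc|apply HPhi]|apply cpt_const]. }
  assert (Hf1 : f 1 = 0) by (unfold f; rewrite HD1, HPhi1; ring).
  assert (HPI := PI_RGT_0).
  assert (Hf0 : PI < Rabs (f 0)).
  { unfold f. assert (H1 := Rabs_triang_inv (Phi 0) (D 0)).
    replace (D 0 - Phi 0) with (- (Phi 0 - D 0)) by ring. rewrite Rabs_Ropp. lra. }
  assert (Hcase : PI < f 0 \/ f 0 < - PI).
  { unfold Rabs in Hf0; destruct Rcase_abs; lra. }
  destruct Hcase as [Hc|Hc].
  - destruct (IVT_cor (fun a => f a - PI) 0 1 (Hfc PI)) as [z [Hz Ez]]; [lra| rewrite Hf1; nra|].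
    assert (Hc' := HcosD z Hz). fold (f z) in Hc'. replace (f z) with PI in Hc' by lra.
    rewrite cos_PI in Hc'; lra.
  - destruct (IVT_cor (fun a => f a - - PI) 0 1 (Hfc (- PI))) as [z [Hz Ez]]; [lra| rewrite Hf1; nra|].
    assert (Hc' := HcosD z Hz). fold (f z) in Hc'. replace (f z) with (- PI) in Hc' by lra.
    rewrite cos_neg, cos_PI in Hc'; lra.
Qed.
End Core.
From Stdlib Require Import Reals Lra Lia ZArith Classical ClassicalEpsilon.
From Coquelicot Require Import Coquelicot.
Open Scope R_scope.

Definition ee (t : R) : C := (cos t, sin t).
Definition Hf (ea eb e1 ga gb g1 : C) : C := (eb * ga + ea * (g1 - gb) + e1 * (gb - ga))%C.

Lemma ee_unit t : (ee t * Cconj (ee t))%C = 1%C.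
Proof. unfold ee, Cmult, Cconj; simpl. assert (H := sin2_cos2 t). unfold Rsqr in H. unfold RtoC. f_equal; lra. Qed.

Lemma rearr_generic (g dg : R -> vec) theta c a b :
  0 < c -> (forall s, 0 <= s <= 1 -> dg s = (c * cos (theta s), c * sin (theta s))) ->
  0 <= a < b -> b < 1 ->
  Hf (ee (theta a)) (ee (theta b)) (ee (theta 1)) (g a) (g b) (g 1) = 0%C ->
  apos (rearranged c g dg a b) 1 = (0, 0).
Proof.
  intros Hc Hdg Hab Hb HH. unfold rearranged, concat, restr. simpl.
  destruct (Rle_dec 1 (a - 0 + (1 - b) - 0)); [lra|].
  destruct (Rle_dec (a - 0 + (1 - b) - 0) (a - 0)); [lra|].
  destruct (Rle_dec (a - 0 + (1 - b)) (a - 0)); [lra|].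
  replace (a - 0 + (1 - b) - (a - 0) + b) with 1 by ring.
  replace (1 - (a - 0 + (1 - b) - 0) + a) with b by ring.
  rewrite (Hdg a), (Hdg b), (Hdg 1) by lra.
  assert (Ua := ee_unit (theta a)). assert (Ub := ee_unit (theta b)).
  set (ea := ee (theta a)) in *. set (eb := ee (theta b)) in *. set (e1 := ee (theta 1)) in *.
  assert (E : forall x, / c * (c * x) = x) by (intros; field; lra).
  unfold vadd, rot, vscale, vsub; simpl. rewrite !E.
  assert (Hr : forall (X : C), X = (Cconj eb * Hf ea eb e1 (g a) (g b) (g 1)
              + (1 - eb * Cconj eb) * g a + (ea * Cconj ea - 1) * (e1 * Cconj eb * (g b - g a)))%C ->
              X = (0,0)).
  { intros X ->. rewrite HH, Ua, Ub. transitivity (RtoC 0); [ring|reflexivity]. }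
  apply Hr. unfold Hf, ea, eb, e1, ee. destruct (g a) as [gax gay], (g b) as [gbx gby], (g 1) as [g1x g1y].
  unfold Cmult, Cplus, Cminus, Copp, Cconj, RtoC; simpl. f_equal; field; lra.
Qed.
From Stdlib Require Import Reals Lra Lia ZArith Classical ClassicalEpsilon.
From Coquelicot Require Import Coquelicot.
Open Scope R_scope.

Lemma vnorm_Cmod (p : vec) : vnorm p = Cmod p.
Proof. destruct p; unfold vnorm; rewrite Cmod_pair; reflexivity. Qed.

Lemma deriv_cont f df : deriv_on 0 1 f df -> cont_on 0 1 f.
Proof.
  intros Hd s Hs eps Heps.
  destruct (Hd s Hs 1 Rlt_0_1) as [d1 [Hd1 H1]].
  set (K := Rabs (df s) + 1).
  assert (HK : 0 < K) by (unfold K; assert (H := Rabs_pos (df s)); lra).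
  exists (Rmin d1 (eps / K)). split.
  { apply Rmin_pos; auto. apply Rdiv_lt_0_compat; auto. }
  intros t Ht Hts.
  destruct (Req_dec t s) as [->|Hne].
  { rewrite Rminus_diag, Rabs_R0; auto. }
  assert (Hpos : 0 < Rabs (t - s)) by (apply Rabs_pos_lt; lra).
  assert (Hlt1 : Rabs (t - s) < d1) by (eapply Rlt_le_trans; [exact Hts| apply Rmin_l]).
  assert (Hlt2 : Rabs (t - s) < eps / K) by (eapply Rlt_le_trans; [exact Hts| apply Rmin_r]).
  assert (Q := H1 t Ht (conj Hpos Hlt1)).
  assert (Q2 : Rabs ((f t - f s) / (t - s)) <= K).
  { unfold K. replace ((f t - f s) / (t - s)) with (((f t - f s) / (t - s) - df s) + df s) by ring.
    eapply Rle_trans; [apply Rabs_triang|]. lra. }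
  replace (f t - f s) with ((f t - f s) / (t - s) * (t - s)) by (field; lra).
  rewrite Rabs_mult.
  apply (Rle_lt_trans _ (K * Rabs (t - s))).
  { apply Rmult_le_compat_r; auto. apply Rabs_pos. }
  apply (Rmult_lt_compat_l K) in Hlt2; auto.
  replace (K * (eps / K)) with eps in Hlt2 by (field; lra). exact Hlt2.
Qed.

Lemma cont_cl f : cont_on 0 1 f -> forall x, continuity_pt (fun s => f (cl s)) x.
Proof.
  intros Hf x. apply cpt_intro. intros eps Heps.
  destruct (Hf (cl x) (cl_in x) eps Heps) as [d [Hd H]].
  exists d; split; auto. intros y Hy. apply H. apply cl_in.
  eapply Rle_lt_trans; [apply cl_lip|auto].
Qed.

Lemma unif f : (forall x, continuity_pt f x) -> forall eps, 0 < eps -> exists del, 0 < del /\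
  forall x y, 0 <= x <= 1 -> 0 <= y <= 1 -> Rabs (x - y) < del -> Rabs (f x - f y) < eps.
Proof.
  intros Hf eps Heps.
  destruct (Heine f (fun c => 0 <= c <= 1) (compact_P3 0 1) (fun x _ => Hf x) (mkposreal eps Heps)) as [d Hd].
  exists d; split; [apply cond_pos|]. intros x y Hx Hy Hxy. apply (Hd x y Hx Hy Hxy).
Qed.

Lemma cpt_cos f x : continuity_pt f x -> continuity_pt (fun y => cos (f y)) x.
Proof. intros; apply (continuity_pt_comp f cos); auto. apply continuity_cos. Qed.
Lemma cpt_sin f x : continuity_pt f x -> continuity_pt (fun y => sin (f y)) x.
Proof. intros; apply (continuity_pt_comp f sin); auto. apply continuity_sin. Qed.

Lemma Cmod_le_sum (z : C) : Cmod z <= Rabs (fst z) + Rabs (snd z).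
Proof.
  destruct z as [x y]. rewrite Cmod_pair. simpl.
  assert (Hx := Rabs_pos x). assert (Hy := Rabs_pos y).
  rewrite <- (sqrt_square (Rabs x + Rabs y)) by lra.
  apply sqrt_le_1_alt.
  assert (Ex : Rabs x * Rabs x = x * x) by (rewrite <- Rabs_mult; apply Rabs_pos_eq; nra).
  assert (Ey : Rabs y * Rabs y = y * y) by (rewrite <- Rabs_mult; apply Rabs_pos_eq; nra).
  nra.
Qed.

Lemma Cmod_ee t : Cmod (ee t) = 1.
Proof.
  unfold ee. rewrite Cmod_pair. assert (H := sin2_cos2 t). unfold Rsqr in H.
  replace (cos t * cos t + sin t * sin t) with 1 by lra. apply sqrt_1.
Qed.

Lemma polar_ee t : polar (ee t) t.
Proof. unfold polar. rewrite Cmod_ee. unfold ee. f_equal; ring. Qed.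

Lemma polar_scale_up r z a : 0 < r -> polar z a -> polar (RtoC r * z)%C a.
Proof.
  unfold polar; intros Hr Hz. rewrite Cmod_mult.
  assert (Cmod (RtoC r) = r) by (unfold Cmod; simpl; rewrite Rmult_0_l, Rplus_0_r, Rmult_1_r; apply sqrt_square; lra).
  rewrite H. rewrite RtoC_multC. destruct z as [zx zy]. set (rz := Cmod (zx, zy)) in *. clearbody rz.
  injection Hz; intros E1 E2. simpl. rewrite E1, E2. f_equal; ring.
Qed.

Lemma Hbound (ea eb e1 ea' eb' ga gb g1 ga' gb' : C) M :
  Cmod ea = 1 -> Cmod eb = 1 -> Cmod e1 = 1 -> Cmod ea' = 1 -> Cmod eb' = 1 ->
  Cmod ga <= M -> Cmod gb <= M -> Cmod g1 <= M ->
  Cmod (Hf ea eb e1 ga gb g1 - Hf ea' eb' e1 ga' gb' g1)%C <=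
  M * Cmod (eb - eb')%C + 2 * M * Cmod (ea - ea')%C + 2 * Cmod (ga - ga')%C + 2 * Cmod (gb - gb')%C.
Proof.
  intros Ha Hb H1 Ha' Hb' Ga Gb G1.
  assert (E : (Hf ea eb e1 ga gb g1 - Hf ea' eb' e1 ga' gb' g1)%C =
    ((eb - eb') * ga + eb' * (ga - ga') + (ea - ea') * (g1 - gb) + ea' * (- (gb - gb'))
     + e1 * ((gb - gb') - (ga - ga')))%C) by (unfold Hf; ring).
  rewrite E.
  set (X1 := ((eb - eb') * ga)%C). set (X2 := (eb' * (ga - ga'))%C).
  set (X3 := ((ea - ea') * (g1 - gb))%C). set (X4 := (ea' * (- (gb - gb')))%C).
  set (X5 := (e1 * ((gb - gb') - (ga - ga')))%C).
  assert (T1 := Cmod_triangle (X1 + X2 + X3 + X4) X5).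
  assert (T2 := Cmod_triangle (X1 + X2 + X3) X4).
  assert (T3 := Cmod_triangle (X1 + X2) X3).
  assert (T4 := Cmod_triangle X1 X2).
  assert (B1 : Cmod X1 <= M * Cmod (eb - eb')%C).
  { unfold X1; rewrite Cmod_mult. rewrite Rmult_comm. apply Rmult_le_compat_r; auto. apply Cmod_ge_0. }
  assert (B2 : Cmod X2 = Cmod (ga - ga')%C) by (unfold X2; rewrite Cmod_mult, Hb'; ring).
  assert (B3 : Cmod X3 <= 2 * M * Cmod (ea - ea')%C).
  { unfold X3; rewrite Cmod_mult. rewrite (Rmult_comm (2 * M)). apply Rmult_le_compat_l; [apply Cmod_ge_0|].
    assert (T := Cmod_triangle g1 (- gb)%C). rewrite Cmod_opp in T. unfold Cminus. lra. }
  assert (B4 : Cmod X4 = Cmod (gb - gb')%C) by (unfold X4; rewrite Cmod_mult, Ha', Cmod_opp; ring).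
  assert (B5 : Cmod X5 <= Cmod (gb - gb')%C + Cmod (ga - ga')%C).
  { unfold X5; rewrite Cmod_mult, H1, Rmult_1_l. assert (T := Cmod_triangle (gb - gb')%C (- (ga - ga'))%C).
    rewrite Cmod_opp in T. unfold Cminus at 1. lra. }
  lra.
Qed.

Lemma ee_2PIk k : ee (2 * PI * IZR k) = (1, 0).
Proof.
  assert (Hpos : forall p, ee (2 * PI * IZR (Zpos p)) = (1, 0)).
  { intros p. replace (IZR (Zpos p)) with (INR (Pos.to_nat p)) by (rewrite INR_IZR_INZ, positive_nat_Z; reflexivity).
    unfold ee. replace (2 * PI * INR (Pos.to_nat p)) with (0 + 2 * INR (Pos.to_nat p) * PI) by ring.
    rewrite cos_period, sin_period, cos_0, sin_0. reflexivity. }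
  destruct k as [|p|p].
  - unfold ee. rewrite Rmult_0_r, cos_0, sin_0. reflexivity.
  - apply Hpos.
  - assert (H := Hpos p). unfold ee in *. injection H; intros.
    replace (2 * PI * IZR (Zneg p)) with (- (2 * PI * IZR (Zpos p))) by (rewrite <- Pos2Z.opp_pos, opp_IZR; ring).
    rewrite cos_neg, sin_neg, H0, H1. f_equal; ring.
Qed.

Lemma ee_mult_nz t (z : C) : z <> 0%C -> (ee t * z)%C <> 0%C.
Proof.
  intros Hz E. assert (Cmod (ee t * z)%C = 0) by (rewrite E; apply Cmod_0).
  rewrite Cmod_mult, Cmod_ee, Rmult_1_l in H. apply Hz, Cmod_eq_0; auto.
Qed.

Lemma B_lip A A' T T' : 0 <= A <= 1 -> 0 <= A' <= 1 -> 0 <= T <= 1 -> 0 <= T' <= 1 ->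
  Rabs ((A + T * (1 - A)) - (A' + T' * (1 - A'))) <= Rabs (A - A') + Rabs (T - T').
Proof.
  intros. replace ((A + T * (1 - A)) - (A' + T' * (1 - A'))) with ((A - A') * (1 - T) + (T - T') * (1 - A')) by ring.
  eapply Rle_trans; [apply Rabs_triang|]. rewrite !Rabs_mult.
  rewrite (Rabs_pos_eq (1 - T)), (Rabs_pos_eq (1 - A')) by lra.
  assert (H3 := Rabs_pos (A - A')). assert (H4 := Rabs_pos (T - T')). nra.
Qed.
From Stdlib Require Import Reals Lra Lia ZArith Classical ClassicalEpsilon.
From Coquelicot Require Import Coquelicot.
Open Scope R_scope.

Theorem lemma3p2 (g dg : R -> R * R) (theta : R -> R) (c M : R) :
  0 < c ->
  C1_curve_on 0 1 g dg ->
  (forall s, inI 0 1 s -> vnorm (dg s) = c) ->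
  g 0 = (0, 0) ->
  dg 0 = (c, 0) ->
  turning_angle 0 1 c dg theta ->
  (exists k : Z, theta 0 = 2 * PI * IZR k) ->
  Rabs (theta 1 - theta 0) >= 2 * PI ->
  (forall s, inI 0 1 s -> vnorm (g s) <= M) ->
  (exists s0, inI 0 1 s0 /\ vnorm (g s0) = M) ->
  vnorm (g 1) >= sqrt (2 * (1 - cos (theta 1))) * M ->
  exists c1 c2, 0 <= c1 <= c2 /\ c2 <= 1 /\
    apos (rearranged c g dg c1 c2) 0 = apos (rearranged c g dg c1 c2) 1.
Proof.
  intros Hc HC1 Hspeed Hg0 Hdg0 [Hthc Hthd] [k Hk] Hturn HM _ Hcond.
  destruct HC1 as [Hd1 [Hd2 _]].
  assert (Hg1c := deriv_cont _ _ Hd1). assert (Hg2c := deriv_cont _ _ Hd2).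
  assert (Hdg : forall s, 0 <= s <= 1 -> dg s = (c * cos (theta s), c * sin (theta s))) by (intros; apply Hthd; auto).
  assert (HM' : forall s, 0 <= s <= 1 -> Cmod (g s) <= M) by (intros; rewrite <- vnorm_Cmod; apply HM; auto).
  assert (HM0 : 0 <= M) by (eapply Rle_trans; [apply Cmod_ge_0| apply (HM' 0); lra]).
  destruct (classic (g 1 = (0, 0))) as [G1|G1].
  { exists 0, 0. split; [lra|split; [lra|]].
    unfold rearranged, concat, restr; simpl.
    destruct (Rle_dec 0 (0 - 0 + (1 - 0) - 0)); [|lra].
    destruct (Rle_dec (0 + 0) (0 - 0)); [|lra].
    destruct (Rle_dec 1 (0 - 0 + (1 - 0) - 0)); [|lra].
    destruct (Rle_dec (1 + 0) (0 - 0)); [lra|].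
    rewrite Hdg0. replace (0 + 0 + 0) with 0 by ring. replace (1 + 0 - (0 - 0) + 0) with 1 by ring.
    rewrite G1, Hg0. unfold vadd, rot, vscale, vsub; simpl. f_equal; field; lra. }
  set (gc := fun s => g (cl s)).
  set (ec := fun s => ee (theta (cl s))).
  set (HH := fun a b => Hf (ec a) (ec b) (ec 1) (gc a) (gc b) (gc 1)).
  assert (cl1 : cl 1 = 1) by (apply cl_id; lra).
  assert (cl0 : cl 0 = 0) by (apply cl_id; lra).
  assert (HHa : forall a, HH a a = (ec a * gc 1)%C) by (intros; unfold HH, Hf; ring).
  assert (HH1 : forall a, HH a 1 = (ec 1 * gc 1)%C) by (intros; unfold HH, Hf; ring).
  assert (gc1 : gc 1 = g 1) by (unfold gc; rewrite cl1; auto).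
  destruct (classic (exists a b, 0 <= a <= b /\ b <= 1 /\ HH a b = 0%C)) as [[a [b [Hab [Hb1 Hz]]]] | Hno].
  { assert (Hne : a <> b).
    { intros <-. rewrite HHa in Hz. apply (ee_mult_nz _ (gc 1)) in Hz; auto. rewrite gc1; auto. }
    assert (Hne1 : b <> 1).
    { intros ->. rewrite HH1 in Hz. apply (ee_mult_nz _ (gc 1)) in Hz; auto. rewrite gc1; auto. }
    exists a, b. split; [lra|split; [lra|]].
    rewrite (rearr_generic g dg theta c a b); auto; try lra.
    - unfold rearranged, concat, restr; simpl.
      destruct (Rle_dec 0 (a - 0 + (1 - b) - 0)); [|lra].
      destruct (Rle_dec (0 + 0) (a - 0)); [|lra].
      replace (0 + 0 + 0) with 0 by ring. auto.
    - unfold HH, ec, gc in Hz. rewrite !cl_id in Hz by lra. exact Hz. }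
  exfalso.
  set (P := fun a t => HH (cl a) (cl a + cl t * (1 - cl a))).
  set (Phi := fun a => theta 1 - theta (cl a)).
  assert (HNZ : forall a t, P a t <> 0%C).
  { intros a t E. apply Hno. exists (cl a), (cl a + cl t * (1 - cl a)).
    assert (Ha := cl_in a). assert (Ht := cl_in t). split; [nra|split; [nra|exact E]]. }
  apply (core P Phi).
  -
    intros eps Heps.
    set (K := 3 * M + 5). assert (HK : 0 < K) by (unfold K; lra).
    set (eta := eps / K). assert (Heta : 0 < eta) by (apply Rdiv_lt_0_compat; auto).
    assert (Heta2 : 0 < eta / 2) by lra.
    destruct (unif (fun s => fst (gc s)) (cont_cl _ Hg1c) _ Heta2) as [d1 [Hd1p U1]].
    destruct (unif (fun s => snd (gc s)) (cont_cl _ Hg2c) _ Heta2) as [d2 [Hd2p U2]].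
    assert (Hthcl := cont_cl _ Hthc).
    destruct (unif (fun s => cos (theta (cl s))) (fun x => cpt_cos _ x (Hthcl x)) _ Heta2) as [d3 [Hd3p U3]].
    destruct (unif (fun s => sin (theta (cl s))) (fun x => cpt_sin _ x (Hthcl x)) _ Heta2) as [d4 [Hd4p U4]].
    set (d := Rmin (Rmin d1 d2) (Rmin d3 d4)).
    assert (Hd : 0 < d) by (unfold d; repeat apply Rmin_pos; auto).
    assert (Hdi : d <= d1 /\ d <= d2 /\ d <= d3 /\ d <= d4).
    { unfold d; repeat split.
      - eapply Rle_trans; [apply Rmin_l|apply Rmin_l].
      - eapply Rle_trans; [apply Rmin_l|apply Rmin_r].
      - eapply Rle_trans; [apply Rmin_r|apply Rmin_l].
      - eapply Rle_trans; [apply Rmin_r|apply Rmin_r]. }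
    assert (Gd : forall x y, 0 <= x <= 1 -> 0 <= y <= 1 -> Rabs (x - y) < d -> Cmod (gc x - gc y)%C < eta).
    { intros x y Hx Hy Hxy. eapply Rle_lt_trans; [apply Cmod_le_sum|]. simpl.
      assert (A1 := U1 x y Hx Hy ltac:(lra)). assert (A2 := U2 x y Hx Hy ltac:(lra)).
      replace (fst (gc x) + - fst (gc y)) with (fst (gc x) - fst (gc y)) by ring.
      replace (snd (gc x) + - snd (gc y)) with (snd (gc x) - snd (gc y)) by ring. lra. }
    assert (Ed : forall x y, 0 <= x <= 1 -> 0 <= y <= 1 -> Rabs (x - y) < d -> Cmod (ec x - ec y)%C < eta).
    { intros x y Hx Hy Hxy. eapply Rle_lt_trans; [apply Cmod_le_sum|]. unfold ec, ee; simpl.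
      assert (A1 := U3 x y Hx Hy ltac:(lra)). assert (A2 := U4 x y Hx Hy ltac:(lra)).
      replace (cos (theta (cl x)) + - cos (theta (cl y))) with (cos (theta (cl x)) - cos (theta (cl y))) by ring.
      replace (sin (theta (cl x)) + - sin (theta (cl y))) with (sin (theta (cl x)) - sin (theta (cl y))) by ring. lra. }
    exists (d / 2). split; [lra|].
    intros a a' t t' Ha Ht. unfold P, HH.
    set (A := cl a). set (A' := cl a'). set (B := A + cl t * (1 - A)). set (B' := A' + cl t' * (1 - A')).
    assert (IA := cl_in a). assert (IA' := cl_in a'). assert (IT := cl_in t). assert (IT' := cl_in t').
    assert (HA : Rabs (A - A') < d) by (eapply Rle_lt_trans; [apply cl_lip|lra]).
    assert (HT : Rabs (cl t - cl t') < d / 2) by (eapply Rle_lt_trans; [apply cl_lip|lra]).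
    assert (HA2 : Rabs (A - A') < d / 2) by (eapply Rle_lt_trans; [apply cl_lip|lra]).
    assert (HB : Rabs (B - B') < d) by (eapply Rle_lt_trans; [apply B_lip; auto|lra]).
    assert (IB : 0 <= B <= 1) by (unfold B; fold A in IA; nra).
    assert (IB' : 0 <= B' <= 1) by (unfold B'; fold A' in IA'; nra).
    eapply Rle_lt_trans; [apply (Hbound _ _ _ _ _ _ _ _ _ _ M)|].
    all: try (unfold ec; apply Cmod_ee).
    all: try (unfold gc; apply HM', cl_in).
    assert (X1 := Ed B B' IB IB' HB). assert (X2 := Ed A A' IA IA' HA).
    assert (X3 := Gd A A' IA IA' HA). assert (X4 := Gd B B' IB IB' HB).
    assert (E1 : eps = K * eta) by (unfold eta; field; lra).
    rewrite E1. unfold K.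
    assert (M * Cmod (ec B - ec B')%C <= M * eta) by (apply Rmult_le_compat_l; lra).
    assert (M * Cmod (ec A - ec A')%C <= M * eta) by (apply Rmult_le_compat_l; lra).
    nra.
  - exact HNZ.
  - intros a t. unfold P. rewrite (cl_id (cl a)) by apply cl_in. reflexivity.
  - intro x. unfold Phi. apply cpt_minus; [apply cpt_const| apply (cont_cl _ Hthc)].
  - intros a Ha. unfold P. rewrite cl1, cl0.
    replace (cl a + 1 * (1 - cl a)) with 1 by ring. replace (cl a + 0 * (1 - cl a)) with (cl a) by ring.
    rewrite HH1, HHa. rewrite Cmult_conj.
    replace (ec 1 * gc 1 * (Cconj (ec (cl a)) * Cconj (gc 1)))%C with ((gc 1 * Cconj (gc 1)) * (ec 1 * Cconj (ec (cl a))))%C by ring.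
    rewrite conj_self. change (Cmod (gc 1) * Cmod (gc 1), 0) with (RtoC (Cmod (gc 1) * Cmod (gc 1))).
    apply polar_scale_up.
    + assert (0 < Cmod (gc 1)) by (apply Cmod_gt_0; rewrite gc1; auto). nra.
    + unfold Phi, ec. rewrite cl1, (cl_id (cl a)) by apply cl_in.
      replace (theta 1 - theta (cl a)) with (theta 1 + - theta (cl a)) by ring.
      apply polar_mult; [apply polar_ee| apply polar_conj, polar_ee].
  - intros t. unfold P. rewrite cl1. replace (1 + cl t * (1 - 1)) with 1 by ring.
    replace (1 + cl 0 * (1 - 1)) with 1 by ring. reflexivity.
  - unfold Phi. rewrite cl1. ring.
  - exists (gc 1). intros t Ht. assert (Hnz := HNZ 0 t). unfold P in *. rewrite cl0 in *.
    replace (0 + cl t * (1 - 0)) with (cl t) in * by ring.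
    assert (E0 : HH 0 (cl t) = (gc 1 - (1 - ec 1) * gc (cl t))%C).
    { unfold HH, Hf. assert (ec 0 = RtoC 1) by (unfold ec; rewrite cl0, Hk; apply ee_2PIk).
      assert (gc 0 = RtoC 0) by (unfold gc; rewrite cl0, Hg0; reflexivity).
      rewrite H, H0. ring. }
    rewrite E0 in *.
    set (v := ((1 - ec 1) * gc (cl t))%C) in *. set (w := gc 1) in *.
    assert (Hv : Cmod v <= Cmod w).
    { unfold v. rewrite Cmod_mult. rewrite gc1. rewrite vnorm_Cmod in Hcond.
      assert (E1 : Cmod (1 - ec 1)%C = sqrt (2 * (1 - cos (theta 1)))).
      { unfold ec. rewrite cl1. unfold ee. unfold Cminus, Cplus, Copp, RtoC. rewrite Cmod_pair. simpl. f_equal.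
        assert (H := sin2_cos2 (theta 1)). unfold Rsqr in H. nra. }
      rewrite E1. apply Rge_le in Hcond. eapply Rle_trans; [|exact Hcond].
      apply Rmult_le_compat_l; [apply sqrt_pos|]. unfold gc. apply HM', cl_in. }
    assert (Id : fst ((w - v) * Cconj w)%C = (Cmod w * Cmod w - Cmod v * Cmod v) / 2 + Cmod (w - v)%C * Cmod (w - v)%C / 2).
    { rewrite !Cmod_sq. destruct w, v; simpl. field. }
    rewrite Id.
    assert (0 < Cmod (w - v)%C) by (apply Cmod_gt_0; auto).
    assert (0 <= Cmod v) by apply Cmod_ge_0.
    nra.
  - unfold Phi. rewrite cl0. apply Rge_le; auto.
Qed.
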